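(* Let $(X,d)$ be a separable complete metric space, $(\Omega,\mathsf{F},\mathbb{P})$ a probability space, $F:X\to[0,\infty]$ measurable with $\mathrm{zer}F:=\{z\in X\mid F(z)=0\}$ closed and non-empty, and $\phi:X\times X\to[0,\infty)$ a Carath\'eodory distance. Let $\tau:[0,\infty)\to[0,\infty)$ be convex and nondecreasing with $\tau(0)=0$ and $\tau(\varepsilon)>0$ for all $\varepsilon>0$, and let $D$ be a collection of $X$-valued random variables such that $\mathrm{dist}^\phi_{\mathrm{zer}F}(x)$ is integrable for all $x\in D$. If $\tau$ (restricted to $(0,\infty)$) is a modulus of $\phi$-regularity for $F$, then it is also a modulus of $\phi$-regularity for $F$ in mean w.r.t.\ $D$.
   Context: A Carath\'eodory distance is a function $\phi:X\times X\to[0,\infty)$ continuous in its left argument and Borel measurable in its right argument; $\mathrm{dist}^\phi_S(x):=\inf_{s\in S}\phi(s,x)$. A modulus of $\phi$-regularity for $F$ is a function $\tau:(0,\infty)\to(0,\infty)$ such that for all $\varepsilon>0$ and $x\in X$, $F(x)<\tau(\varepsilon)$ implies $\mathrm{dist}^\phi_{\mathrm{zer}F}(x)<\varepsilon$. A modulus of $\phi$-regularity for $F$ in mean w.r.t.\ $D$ is a function $\tau:(0,\infty)\to(0,\infty)$ such that for all $\varepsilon>0$ and $x\in D$, $\mathbb{E}[F(x)]<\tau(\varepsilon)$ implies $\mathbb{E}[\mathrm{dist}^\phi_{\mathrm{zer}F}(x)]<\varepsilon$. *)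

(* Defs.v *)
From HB Require Import structures.
From mathcomp Require Import all_boot all_order all_algebra.
From mathcomp Require Import all_classical all_reals all_analysis measurable_realfun.
Set Implicit Arguments. Unset Strict Implicit. Unset Printing Implicit Defensive.
Import Order.TTheory GRing.Theory Num.Theory.
Import numFieldNormedType.Exports.
Local Open Scope classical_set_scope.
Local Open Scope ring_scope.

Definition borelX (X : topologicalType) (A : set X) : Prop :=
  <<s [set U : set X | open U] >> A.

Definition separable_space (X : topologicalType) : Prop :=
  exists S : set X, countable S /\ closure S = setT.

Definition zer (X : Type) (R : realType) (F : X -> \bar R) : set X :=
  [set z | F z = 0%E].

Definition caratheodory_distance (R : realType) (X : pseudoMetricType R)
  (phi : X -> X -> R) : Prop :=
  [/\ (forall x y, 0 <= phi x y),
      (forall y, continuous (fun s => phi s y)) &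
      (forall s (B : set R), measurable B -> borelX ((fun y => phi s y) @^-1` B))].

Definition distphi (R : realType) (X : Type) (phi : X -> X -> R) (S : set X)
  (x : X) : R := inf [set phi s x | s in S].

Definition modulus_regularity (R : realType) (X : Type) (phi : X -> X -> R)
  (F : X -> \bar R) (tau : R -> R) : Prop :=
  forall (eps : R) (x : X), 0 < eps ->
    (F x < (tau eps)%:E)%E -> distphi phi (zer F) x < eps.

Definition modulus_regularity_mean (R : realType) (X : Type)
  (d : measure_display) (Omega : measurableType d) (P : probability Omega R)
  (phi : X -> X -> R) (F : X -> \bar R) (tau : R -> R) (D : set (Omega -> X)) : Prop :=
  forall (eps : R) (x : Omega -> X), 0 < eps -> D x ->
    (\int[P]_w F (x w) < (tau eps)%:E)%E ->
    (\int[P]_w (distphi phi (zer F) (x w))%:E < eps%:E)%E.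

(* Main.v *)
Require Import Defs.
From HB Require Import structures.
From mathcomp Require Import all_boot all_order all_algebra.
From mathcomp Require Import all_classical all_reals all_analysis measurable_realfun.
From mathcomp Require Import ring lra.
Import Order.TTheory GRing.Theory Num.Theory.
Import numFieldNormedType.Exports.
Local Open Scope classical_set_scope.
Local Open Scope ring_scope.

Lemma slope (R : realType) (tau : R -> R) :
  (forall a b t, 0 <= a -> 0 <= b -> 0 <= t <= 1 ->
     tau (t * a + (1 - t) * b) <= t * tau a + (1 - t) * tau b) ->
  forall y e z, 0 <= y -> y < e -> e < z ->
  (tau e - tau y) / (e - y) <= (tau z - tau e) / (z - e).
Proof.
move=> conv y e z y0 ye ez.
have zy : 0 < z - y by lra.
pose t := (z - e) / (z - y).
have ht : t * (z - y) = z - e by rewrite /t mulrVK ?unitfE ?gt_eqF.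
have t0 : 0 <= t by rewrite /t divr_ge0 //; lra.
have t1 : t <= 1 by rewrite /t ler_pdivrMr //; lra.
have := conv y z t y0 (ltW (le_lt_trans y0 (lt_trans ye ez))) (introT andP (conj t0 t1)).
have -> : t * y + (1 - t) * z = e.
  have : t * y + (1 - t) * z = z - t * (z - y) by ring.
  by rewrite ht => ->; ring.
move=> h.
rewrite ler_pdivrMr ?subr_gt0 // mulrAC ler_pdivlMr ?subr_gt0 //.
nra.
Qed.

Lemma subgrad (R : realType) (tau : R -> R) (e : R) :
  (forall a b t, 0 <= a -> 0 <= b -> 0 <= t <= 1 ->
     tau (t * a + (1 - t) * b) <= t * tau a + (1 - t) * tau b) ->
  tau 0 = 0 -> 0 < e -> 0 < tau e ->
  exists c, 0 < c /\ forall y, 0 <= y -> tau e + c * (y - e) <= tau y.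
Proof.
move=> conv t0 e0 te.
pose S := [set (tau e - tau y) / (e - y) | y in [set y | 0 <= y < e]].
have S0 : S (tau e / e).
  by exists 0; [rewrite /= lexx e0 | rewrite t0 !subr0].
have Sne : S !=set0 by exists (tau e / e).
have ub : forall z, e < z -> ubound S ((tau z - tau e) / (z - e)).
  move=> z ez _ [y /andP[y0 ye] <-]; exact: slope.
have hs : has_sup S by split => //; exists ((tau (e + 1) - tau e) / (e + 1 - e)); apply: ub; lra.
exists (sup S); split.
  apply: (lt_le_trans _ (sup_upper_bound hs S0)); exact: divr_gt0.
move=> y y0.
have [ye|ey] := ltP y e.
  have : (tau e - tau y) / (e - y) <= sup S.
    by apply: (sup_upper_bound hs); exists y => //; rewrite /= y0 ye.
  rewrite ler_pdivrMr ?subr_gt0 // => h; nra.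
move: ey; rewrite le_eqVlt => /orP[/eqP -> | ey].
  by rewrite subrr mulr0 addr0.
have := ge_sup Sne (ub y ey).
rewrite ler_pdivlMr ?subr_gt0 // => h; nra.
Qed.

Theorem lemma3p8 (R : realType) (X : completePseudoMetricType R)
  (d : measure_display) (Omega : measurableType d) (P : probability Omega R)
  (F : X -> \bar R) (phi : X -> X -> R) (tau : R -> R) (D : set (Omega -> X)) :
  hausdorff_space X ->
  separable_space X ->
  (forall z, (0 <= F z)%E) ->
  (forall B : set (\bar R), measurable B -> borelX (F @^-1` B)) ->
  closed (zer F) ->
  zer F !=set0 ->
  caratheodory_distance phi ->
  (forall a b t, 0 <= a -> 0 <= b -> 0 <= t <= 1 ->
     tau (t * a + (1 - t) * b) <= t * tau a + (1 - t) * tau b) ->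
  (forall a b, 0 <= a -> a <= b -> tau a <= tau b) ->
  tau 0 = 0 ->
  (forall eps, 0 < eps -> 0 < tau eps) ->
  (forall x, D x -> forall B : set X, borelX B -> measurable (x @^-1` B)) ->
  (forall x, D x ->
     P.-integrable setT (fun w => (distphi phi (zer F) (x w))%:E)) ->
  modulus_regularity phi F tau ->
  modulus_regularity_mean P phi F tau D.
Proof.
move=> _ _ F0 HF _ [z0 zz0] [phi0 _ _] conv mono t0 tpos Hxm Hint Hmod.
move=> eps x e0 Dx HFx.
have dist0 : forall y, 0 <= distphi phi (zer F) y.
  move=> y; apply: lb_le_inf; first by exists (phi z0 y), z0.
  by move=> _ [s _ <-]; exact: phi0.
have key : forall y, ((tau (distphi phi (zer F) y))%:E <= F y)%E.
  move=> y; have := dist0 y; rewrite le_eqVlt => /orP[/eqP <-|dp].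
    by rewrite t0.
  rewrite leNgt; apply/negP => h.
  by have := Hmod _ y dp h; rewrite ltxx.
have [c [c0 hc]] := @subgrad R tau eps conv t0 e0 (tpos _ e0).
have pt : forall w, ((tau eps - c * eps)%:E
     + c%:E * (distphi phi (zer F) (x w))%:E <= F (x w))%E.
  move=> w; apply: le_trans (key _).
  rewrite -EFinM -EFinD lee_fin.
  have := hc _ (dist0 (x w)); lra.
have mFx : measurable_fun setT (fun w => F (x w)).
  move=> _ B mB; rewrite setTI; exact: (Hxm x Dx _ (HF B mB)).
have intF : P.-integrable setT (fun w => F (x w)).
  apply/integrableP; split => //.
  under eq_integral do rewrite gee0_abs //.
  exact: (lt_trans HFx (ltry _)).
have intD := Hint x Dx.
have intg : P.-integrable setT (fun w => (tau eps - c * eps)%:E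
     + c%:E * (distphi phi (zer F) (x w))%:E)%E.
  exact: (integrableD measurableT (finite_measure_integrable_cst P (tau eps - c * eps) measurableT) (integrableZl measurableT c intD)).
have := le_integral measurableT intg intF (fun w _ => pt w).
rewrite (integralD measurableT (finite_measure_integrable_cst P (tau eps - c * eps) measurableT) (integrableZl measurableT c intD)).
have P1 : forall r : \bar R, (r * P [set: Omega])%E = r by move=> r; rewrite probability_setT mule1.
rewrite (integral_cst P measurableT ((tau eps - c * eps)%:E)).
rewrite P1.
rewrite (integralZl measurableT intD).
have Ifin := integrable_fin_num measurableT intD.
rewrite -(fineK Ifin) -EFinM -EFinD => h.
have := le_lt_trans h HFx; rewrite lte_fin => h2.
rewrite -(fineK Ifin) lte_fin; nra.
Qed.
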